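(* Fix a single institution with category capacities $q=(q^{o},q^{SC},q^{ST},q^{OBC},q^{EWS})$ of nonnegative integers, a finite set of individuals $\mathcal{I}$ with category memberships $t:\mathcal{I}\to\mathcal{R}\cup\{GC\}$ where $\mathcal{R}=\{SC,ST,OBC,EWS\}$, and a strict merit ranking $\succ$ (a linear order) over $\mathcal{I}$. A (category-assigning) choice rule $C$ satisfies within-category fairness, the over-and-above principle, and quota-filling subject to eligibility (all defined in the context) at every set of applicants $A\subseteq\mathcal{I}$ if and only if $C$ is the over-and-above choice rule $C^{OA}$, i.e. $C^{c}(A)=C^{OA,c}(A)$ for every $A\subseteq\mathcal{I}$ and every category $c\in\{o\}\cup\mathcal{R}$.
   Context: Categories of positions are $\mathcal{C}=\{o\}\cup\mathcal{R}$, where $o$ is the open category. Individuals with $t_i=GC$ (general category) are eligible only for open-category positions; an individual with $t_i=r\in\mathcal{R}$ is eligible for open-category positions and for category-$r$ positions. For $A\subseteq\mathcal{I}$ and $r\in\mathcal{R}$ let $A^{r}=\{i\in A: t_i=r\}$, and let $rank_A(i)=k$ iff $|\{j\in A: j\succ i\}|=k-1$. A choice rule $C$ assigns to each $A\subseteq\mathcal{I}$ pairwise disjoint sets $C^{o}(A),C^{SC}(A),C^{ST}(A),C^{OBC}(A),C^{EWS}(A)\subseteq A$ with $|C^{o}(A)|\le q^{o}$, and for each $r\in\mathcal{R}$, $C^{r}(A)\subseteq A^{r}$ and $|C^{r}(A)|\le q^{r}$; the chosen set is $C(A)=\bigcup_{c\in\mathcal{C}}C^{c}(A)$. An individual is ''assigned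 a position'' if she is in $C(A)$, and ''assigned to a category-$c$ position'' if she is in $C^{c}(A)$. Axioms (for a given $A$): Over-and-above principle: every $i\in A$ with $rank_A(i)\le q^{o}$ is in $C^{o}(A)$. Within-category fairness: for $i,j\in A$ with $t_i=t_j$ and $i\succ j$, if $j\in C(A)$ then $i\in C(A)$. Quota-filling subject to eligibility: for every $r\in\mathcal{R}$, if some $i\in A$ with $t_i=r$ is not in $C(A)$, then $|C^{r}(A)|=q^{r}$. Over-and-above choice rule $C^{OA}$: Stage 1: $C^{OA,o}(A)$ is the set of the $\min(q^{o},|A|)$ highest-ranked individuals of $A$ under $\succ$. Stage 2: with $A'=A\setminus C^{OA,o}(A)$, for each $r\in\mathcal{R}$, $C^{OA,r}(A)$ is the set of the $\min(q^{r},|A'^{r}|)$ highest-ranked individuals of $A'^{r}=\{i\in A': t_i=r\}$ under $\succ$. Then $C^{OA}(A)=C^{OA,o}(A)\cup\bigcup_{r\in\mathcal{R}}C^{OA,r}(A)$. *)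

(* Defs.v *)
From HB Require Import structures.
From mathcomp Require Import all_boot.
Set Implicit Arguments. Unset Strict Implicit. Unset Printing Implicit Defensive.

Inductive rcat := SC | ST | OBC | EWS.

Definition rcat_eqb (a b : rcat) : bool :=
  match a, b with
  | SC, SC | ST, ST | OBC, OBC | EWS, EWS => true
  | _, _ => false
  end.
Lemma rcat_eqP : Equality.axiom rcat_eqb.
Proof. by case; case; constructor. Qed.
HB.instance Definition _ := hasDecEq.Build rcat rcat_eqP.

(* Membership of an individual: [None] = GC (general category), [Some r] = r in R. *)
Definition indiv_type := option rcat.

Inductive pos_cat := Open | Rsv of rcat.

Definition sub_type (I : finType) (t : I -> indiv_type) (A : {set I}) (r : rcat)
  : {set I} := [set i in A | t i == Some r].

Definition rank (I : finType) (succ : rel I) (A : {set I}) (i : I) : nat :=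
  #|[set j in A | succ j i]|.+1.

Definition strict_linear_order (I : finType) (succ : rel I) : Prop :=
  [/\ irreflexive succ, transitive succ &
      forall i j, i != j -> succ i j || succ j i].

Definition top (I : finType) (succ : rel I) (k : nat) (A : {set I}) : {set I} :=
  [set i in A | rank succ A i <= k].

Definition chosen (I : finType) (C : pos_cat -> {set I} -> {set I}) (A : {set I})
  : {set I} :=
  C Open A :|: C (Rsv SC) A :|: C (Rsv ST) A :|: C (Rsv OBC) A :|: C (Rsv EWS) A.

Definition is_choice_rule (I : finType) (q : pos_cat -> nat) (t : I -> indiv_type)
  (C : pos_cat -> {set I} -> {set I}) : Prop :=
  forall A : {set I},
    [/\ forall c, C c A \subset A,
        forall c c', c <> c' -> [disjoint C c A & C c' A],
        #|C Open A| <= q Open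
      & forall r, C (Rsv r) A \subset sub_type t A r /\ #|C (Rsv r) A| <= q (Rsv r)].

Definition over_and_above (I : finType) (q : pos_cat -> nat) (succ : rel I)
  (C : pos_cat -> {set I} -> {set I}) (A : {set I}) : Prop :=
  forall i, i \in A -> rank succ A i <= q Open -> i \in C Open A.

Definition within_category_fairness (I : finType) (t : I -> indiv_type) (succ : rel I)
  (C : pos_cat -> {set I} -> {set I}) (A : {set I}) : Prop :=
  forall i j, i \in A -> j \in A -> t i = t j -> succ i j ->
    j \in chosen C A -> i \in chosen C A.

Definition quota_filling (I : finType) (q : pos_cat -> nat) (t : I -> indiv_type)
  (C : pos_cat -> {set I} -> {set I}) (A : {set I}) : Prop :=
  forall r : rcat, (exists i, [/\ i \in A, t i = Some r & i \notin chosen C A]) ->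
    #|C (Rsv r) A| = q (Rsv r).

Definition C_OA (I : finType) (q : pos_cat -> nat) (t : I -> indiv_type) (succ : rel I)
  (c : pos_cat) (A : {set I}) : {set I} :=
  match c with
  | Open => top succ (q Open) A
  | Rsv r => top succ (q (Rsv r)) (sub_type t (A :\: top succ (q Open) A) r)
  end.

(* Main.v *)
Require Import Defs.
From mathcomp Require Import all_boot.
From mathcomp Require Import zify.

Set Implicit Arguments. Unset Strict Implicit. Unset Printing Implicit Defensive.

Section Aux.
Variables (I : finType) (succ : rel I).
Hypothesis Hlin : strict_linear_order succ.

Lemma rank_lt (A : {set I}) i j : i \in A -> j \in A -> succ i j ->
  rank succ A i < rank succ A j.
Proof.
case: Hlin => irr tr _ Hi Hj Hij; rewrite /rank ltnS.
apply: proper_card; apply/properP; split.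
  apply/subsetP => x; rewrite !inE => /andP[-> Hx] /=; exact: tr Hx Hij.
by exists i; rewrite !inE ?Hi ?Hij ?irr.
Qed.

Lemma rank_inj (A : {set I}) : {in A &, injective (rank succ A)}.
Proof.
move=> i j Hi Hj E; apply/eqP; apply/negPn/negP => Hne.
case: Hlin => _ _ tot; case/orP: (tot _ _ Hne) => H.
  by move: (rank_lt Hi Hj H); rewrite E ltnn.
by move: (rank_lt Hj Hi H); rewrite E ltnn.
Qed.

Lemma rank_le (A : {set I}) i : i \in A -> rank succ A i <= #|A|.
Proof.
case: Hlin => irr _ _ Hi; rewrite /rank.
apply: proper_card; apply/properP; split.
  by apply/subsetP => x; rewrite !inE => /andP[].
by exists i; rewrite // !inE Hi irr.
Qed.

Lemma card_inj_bound (X : {set I}) (f : I -> nat) m :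
  {in X &, injective f} -> (forall x, x \in X -> f x < m) -> #|X| <= m.
Proof.
move=> finj fb.
have U : uniq (map f (enum X)) by rewrite map_inj_in_uniq ?enum_uniq //;
  move=> x y; rewrite !mem_enum; exact: finj.
have := uniq_leq_size U (s2 := iota 0 m).
rewrite size_map -cardE size_iota; apply => y /mapP[x]; rewrite mem_enum => Hx ->.
by rewrite mem_iota /= fb.
Qed.

Lemma top_sub k (A : {set I}) : top succ k A \subset A.
Proof. by apply/subsetP => x; rewrite inE => /andP[]. Qed.

Lemma card_top k (A : {set I}) : #|top succ k A| = minn k #|A|.
Proof.
have H1 : #|top succ k A| <= k.
  apply: (@card_inj_bound _ (fun i => (rank succ A i).-1)).
    move=> x y; rewrite !inE => /andP[Hx _] /andP[Hy _] E; apply: (@rank_inj A) => //.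
    by move: E; rewrite /rank /= => ->.
  by move=> x; rewrite inE /rank => /andP[_]; case: (#|_|).
have H2 : #|[set i in A | k < rank succ A i]| <= #|A| - k.
  apply: (@card_inj_bound _ (fun i => rank succ A i - k.+1)).
    move=> x y; rewrite !inE => /andP[Hx Lx] /andP[Hy Ly] E; apply: (@rank_inj A) => //.
    lia.
  move=> x; rewrite inE => /andP[Hx Lx]; have := rank_le Hx; lia.
have H3 : #|A| = #|top succ k A| + #|[set i in A | k < rank succ A i]|.
  rewrite -(cardsID [set i | rank succ A i <= k] A); congr (_ + _); apply: eq_card => x;
  by rewrite !inE ?ltnNge; case: (x \in A); rewrite ?andbT ?andbF.
have H4 : #|top succ k A| <= #|A| := subset_leq_card (top_sub k A).
lia.
Qed.

Lemma upclosed_top (X A : {set I}) k :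
  X \subset A -> (forall i j, i \in A -> j \in A -> succ i j -> j \in X -> i \in X) ->
  #|X| = k -> X = top succ k A.
Proof.
case: (Hlin) => irr _ _ XA Hup Hk.
have Sub : X \subset top succ k A.
  apply/subsetP => x Hx; have HxA := subsetP XA x Hx.
  rewrite inE HxA /= /rank -Hk (cardsD1 x X) Hx add1n ltnS.
  apply: subset_leq_card; apply/subsetP => y; rewrite !inE => /andP[Hy Hyx].
  rewrite (Hup y x) // andbT; apply/eqP => E; by rewrite E irr in Hyx.
apply/eqP; rewrite eqEcard Sub /= card_top; lia.
Qed.

End Aux.

Lemma in_sub_type (I : finType) (t : I -> indiv_type) (B : {set I}) r x :
  (x \in Defs.sub_type t B r) = (x \in B) && (t x == Some r).
Proof. by rewrite inE. Qed.

Lemma in_top (I : finType) (succ : rel I) k (B : {set I}) x :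
  (x \in top succ k B) = (x \in B) && (rank succ B x <= k).
Proof. by rewrite inE. Qed.

Lemma chosenP (I : finType) (C : pos_cat -> {set I} -> {set I}) A i :
  reflect (i \in C Open A \/ exists r, i \in C (Rsv r) A) (i \in chosen C A).
Proof.
rewrite /chosen !inE; apply: (iffP idP).
  case/orP=> [/orP[/orP[/orP[H|H]|H]|H]|H]; [by left|right..];
  by eexists; exact: H.
case=> [->|[[] ->]]; by rewrite ?orbT.
Qed.

Theorem theorem1 (I : finType) (q : pos_cat -> nat) (t : I -> indiv_type)
  (succ : rel I) (C : pos_cat -> {set I} -> {set I}) :
  strict_linear_order succ ->
  is_choice_rule q t C ->
  ((forall A : {set I},
      [/\ within_category_fairness t succ C A,
          over_and_above q succ C A
        & quota_filling q t C A])
   <-> (forall (A : {set I}) (c : pos_cat), C c A = C_OA q t succ c A)).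
Proof.
move=> Hlin Hcr.
have Rtype : forall A i r, i \in C (Rsv r) A -> i \in A /\ t i = Some r.
  move=> A i r Hi; case: (Hcr A) => _ _ _ /(_ r) [/subsetP /(_ i Hi)] + _.
  by rewrite inE => /andP[-> /eqP].
split.
- move=> H A.
  have HO : C Open A = top succ (q Open) A.
    case: (H A) (Hcr A) => _ oa _ [sub _ cO _].
    apply/eqP; rewrite eq_sym eqEcard; apply/andP; split.
      by apply/subsetP => x; rewrite inE => /andP[]; exact: oa.
    rewrite card_top // leq_min cO /=; exact: subset_leq_card.
  case=> [//|r] /=.
  set S := Defs.sub_type t (A :\: top succ (q Open) A) r.
  case: (H A) (Hcr A) => fair _ qf [sub disj _ /(_ r) [Xsub Xc]].
  have XS : C (Rsv r) A \subset S.
    apply/subsetP => x Hx; have [HxA Htx] := Rtype _ _ _ Hx.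
    rewrite /S -HO !inE HxA Htx eqxx andbT /=.
    have := disj (Rsv r) Open ltac:(discriminate).
    by move/disjoint_setI0 => /setP /(_ x); rewrite !inE Hx /= => ->.
  have chS : forall i, i \in S -> i \in chosen C A -> i \in C (Rsv r) A.
    move=> i HiS /chosenP Hc; move: HiS; rewrite /S -HO !inE => /andP[/andP[Hno HiA] /eqP Hti].
    case: Hc => [H0|[r' Hr']]; first by rewrite H0 in Hno.
    by have [_] := Rtype _ _ _ Hr'; rewrite Hti => -[E]; rewrite E.
  have [SX|] := boolP (S \subset C (Rsv r) A).
    have E : C (Rsv r) A = S by apply/eqP; rewrite eqEsubset XS SX.
    rewrite E; apply/esym/eqP; rewrite eqEcard top_sub card_top //.
    rewrite E in Xc; rewrite /= leq_min Xc leqnn //.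
  case/subsetPn => i HiS HiX.
  apply: upclosed_top => //.
    move=> a b Ha Hb Hab HbX; apply: chS => //.
    have Hta : t a = Some r by move: Ha; rewrite inE => /andP[_ /eqP].
    have Htb : t b = Some r by move: Hb; rewrite inE => /andP[_ /eqP].
    have [HaA HbA] : a \in A /\ b \in A by move: Ha Hb; rewrite !inE => /andP[/andP[_ ->] _] /andP[/andP[_ ->] _].
    apply: (fair a b) => //; first by rewrite Hta Htb.
    by apply/chosenP; right; exists r.
  apply: qf; exists i; have [HiA Hti] : i \in A /\ t i = Some r by move: (HiS); rewrite /S !inE => /andP[/andP[_ ->] /eqP ->].
  split => //; apply/negP => /chosenP [HO'|[r' Hr']].
    by move: HiS; rewrite /S -HO !inE HO'.
  have [_] := Rtype _ _ _ Hr'; rewrite Hti => -[E]; subst r'.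
  by rewrite Hr' in HiX.
- move=> HC A.
  have chP : forall i, reflect (i \in top succ (q Open) A \/ exists r,
      i \in top succ (q (Rsv r)) (Defs.sub_type t (A :\: top succ (q Open) A) r))
      (i \in chosen C A).
    move=> i; apply: (iffP (chosenP _ _ _)) => [[H|[r H]]|[H|[r H]]];
      rewrite ?HC in H *; [left|right; exists r|left|right; exists r]; rewrite ?HC //.
  split.
  + move=> i j Hi Hj Htij Hij /chP Hjc; apply/chP.
    have [Hit|Hit] := boolP (i \in top succ (q Open) A); first by left.
    right; case: Hjc => [Hjt|[r Hjr]].
      move: Hit Hjt; rewrite !in_top Hi Hj /=; have := rank_lt Hlin Hi Hj Hij; lia.
    exists r; move: Hjr; rewrite in_top => /andP[HjS Hrj].
    have Htj : t j = Some r by move: HjS; rewrite in_sub_type => /andP[_ /eqP].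
    have HiS : i \in Defs.sub_type t (A :\: top succ (q Open) A) r.
      by rewrite in_sub_type in_setD Hit Hi Htij Htj eqxx.
    rewrite in_top HiS /=; have := rank_lt Hlin HiS HjS Hij; lia.
  + by move=> i Hi Hr; rewrite HC inE Hi.
  + move=> r [i [Hi Hti Hnc]]; rewrite HC /= card_top //.
    set S := Defs.sub_type t (A :\: top succ (q Open) A) r.
    have HiS : i \in S.
      rewrite /S in_sub_type in_setD Hi Hti eqxx andbT /=; apply/negP => H0.
      by case/negP: Hnc; apply/chP; left; move: H0; rewrite andbT => /negP; rewrite negbK.
    have Hnt : i \notin top succ (q (Rsv r)) S.
      by apply/negP => H0; case/negP: Hnc; apply/chP; right; exists r.
    have := rank_le Hlin HiS; move: Hnt; rewrite inE HiS /=; lia.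
Qed.
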